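(* For a set of languages $\mathcal{R}$ let $\dot{\mathcal{R}}^\star=\{L^\star\mid L\in\mathcal{R}\}$. (1) There exists a rational set of regular languages $\mathcal{R}$ such that $\dot{\mathcal{R}}^\star$ is not a rational set of regular languages. (2) If $\mathcal{R}$ is a finite rational set of regular languages, then $\dot{\mathcal{R}}^\star$ is a finite rational set of regular languages. (3) Expressing $\dot{\mathcal{R}}^\star$ in the finite case in general requires a new language substitution: there exist an alphabet $\Delta$, a regular language substitution $\varphi:\Delta\to2^{\Sigma^*}$ and a regular $K\subseteq\Delta^+$ with $\mathcal{R}=(K,\varphi)$ finite, such that there is no regular $K'\subseteq\Delta^+$ with $\dot{\mathcal{R}}^\star=(K',\varphi)$.
   Context: Alphabets are nonempty finite sets. A regular language substitution $\varphi:\Delta\to2^{\Sigma^*}$ maps each symbol to a regular language over $\Sigma$, extended by $\varphi(\delta w)=\varphi(\delta)\varphi(w)$. A set $\mathcal{R}$ of regular languages over $\Sigma$ is a rational set of regular languages, written $\mathcal{R}=(K,\varphi)$, if there are an alphabet $\Delta$, a regular $K\subseteq\Delta^+$ and a regular language substitution $\varphi$ with $\mathcal{R}=\{\varphi(w)\mid w\in K\}$. *)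

(* Defs.v *)
From mathcomp Require Import all_boot.
Set Implicit Arguments. Unset Strict Implicit. Unset Printing Implicit Defensive.

Definition lang (Sigma : finType) := seq Sigma -> Prop.

Definition alphabet (Sigma : finType) : Prop := 0 < #|Sigma|.

Definition regular (Sigma : finType) (L : lang Sigma) : Prop :=
  exists (Q : finType) (q0 : Q) (d : Q -> Sigma -> Q) (F : pred Q),
    forall w, L w <-> F (foldl d q0 w).

Definition eps_lang (Sigma : finType) : lang Sigma := fun w => w = [::].

Definition conc (Sigma : finType) (A B : lang Sigma) : lang Sigma :=
  fun w => exists u v, w = u ++ v /\ A u /\ B v.

Definition star (Sigma : finType) (L : lang Sigma) : lang Sigma :=
  fun w => exists ws : seq (seq Sigma), w = flatten ws /\ forall u, u \in ws -> L u.

Definition subst (Delta Sigma : finType) (phi : Delta -> lang Sigma)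
  (w : seq Delta) : lang Sigma :=
  foldr (fun d L => conc (phi d) L) (@eps_lang Sigma) w.

Definition regular_subst (Delta Sigma : finType) (phi : Delta -> lang Sigma) : Prop :=
  forall d, regular (phi d).

Definition nonempty_words (Delta : finType) (K : lang Delta) : Prop :=
  forall w, K w -> w <> [::].

Definition langset (Sigma : finType) := lang Sigma -> Prop.

Definition ratset (Delta Sigma : finType) (K : lang Delta) (phi : Delta -> lang Sigma)
  : langset Sigma :=
  fun L => exists w, K w /\ L = subst phi w.

Definition rational_set (Sigma : finType) (R : langset Sigma) : Prop :=
  exists (Delta : finType) (K : lang Delta) (phi : Delta -> lang Sigma),
    alphabet Delta /\ regular K /\ nonempty_words K /\ regular_subst phi /\
    forall L, R L <-> ratset K phi L.

Definition finite_langset (Sigma : finType) (R : langset Sigma) : Prop :=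
  exists (n : nat) (f : 'I_n -> lang Sigma), forall L, R L <-> exists i, L = f i.

Definition star_set (Sigma : finType) (R : langset Sigma) : langset Sigma :=
  fun L => exists L0, R L0 /\ L = star L0.

(* Main.v *)
Require Import Defs.
From mathcomp Require Import all_boot.
From Stdlib Require Import Classical FunctionalExtensionality PropExtensionality ClassicalEpsilon.
Set Implicit Arguments. Unset Strict Implicit. Unset Printing Implicit Defensive.

Definition a1 (S : finType) : lang S := fun u => size u = 1.

Lemma subst_a1 (D S : finType) (w : seq D) (x : seq S) :
  subst (fun _ => @a1 S) w x <-> size x = size w.
Proof.
elim: w x => [|d w IH] x /=.
- rewrite /eps_lang; split; [by move->|by case: x].
- split.
  + case=> u [v [-> [Hu Hv]]]. by rewrite size_cat Hu (proj1 (IH v) Hv).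
  + case: x => [|y x] //= [Hx]. exists [:: y], x; split=> //; split=> //. by apply/IH.
Qed.

Lemma star_nil (S:finType) (L:lang S) : star L [::].
Proof. by exists [::]; split. Qed.

Lemma conc_nil (S:finType) (A B : lang S) : conc A B [::] -> A [::] /\ B [::].
Proof. case=> u [v [H [Hu Hv]]]. by case: u H Hu => [|? ?] //; case: v Hv => [|? ?]. Qed.

Lemma subst_nil_mem (D S : finType) (phi : D -> lang S) w d x :
  subst phi w [::] -> d \in w -> phi d x -> subst phi w x.
Proof.
elim: w => [|e w IH] //= H0; have [He Hw] := conc_nil H0.
rewrite in_cons => /predU1P [-> Hx|dw Hx].
- by exists x, [::]; rewrite cats0.
- by exists [::], x; split=> //; split=> //; apply: IH.
Qed.

Lemma subst_small (D S : finType) (phi : D -> lang S) w x :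
  (forall d, d \in w -> forall u, phi d u -> u = [::]) -> subst phi w x -> x = [::].
Proof.
elim: w x => [|e w IH] x /= H; first by [].
case=> u [v [-> [Hu Hv]]].
rewrite (H e (mem_head _ _) u Hu) (IH v) //.
by move=> d dw; apply: H; rewrite in_cons dw orbT.
Qed.

Lemma bound_ex (D S : finType) (phi : D -> lang S) (s : seq D) :
  exists B, forall d, d \in s -> (exists u, phi d u /\ u <> [::]) ->
     exists u, phi d u /\ u <> [::] /\ size u <= B.
Proof.
elim: s => [|e s [B HB]]; first by exists 0.
case: (classic (exists u, phi e u /\ u <> [::])) => [[u0 [p0 n0]]|Hn].
- exists (maxn B (size u0)) => d; rewrite in_cons => /predU1P [->|ds] Hd.
  + by exists u0; split=> //; split=> //; rewrite leq_max leqnn orbT.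
  + have [u [pu [nu su]]] := HB d ds Hd.
    by exists u; split=> //; split=> //; rewrite leq_max su.
- exists B => d; rewrite in_cons => /predU1P [->|ds] Hd; first by [].
  exact: HB.
Qed.

Lemma star_size (D S : finType) (w : seq D) (x : seq S) :
  star (subst (fun _ => @a1 S) w) x -> x <> [::] -> size w <= size x.
Proof.
case=> ws [-> Hws]. case: ws Hws => [|u ws] Hws //= _.
have /subst_a1 Hu := Hws u (mem_head _ _).
by rewrite size_cat Hu leq_addr.
Qed.

Lemma regular_nonempty (S : finType) : regular (fun w : seq S => 0 < size w).
Proof.
exists bool, false, (fun _ _ => true), (fun b => b) => w.
have H : forall w : seq S, foldl (fun _ _ => true) true w = true by elim.
by case: w => [|a w] //=; rewrite H.
Qed.

Lemma regular_a1 (S : finType) : regular (@a1 S).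
Proof.
pose d (q : option bool) (a : S) : option bool := if q is None then Some true else Some false.
exists (option bool), None, d, (fun q => q == Some true) => w.
have H : forall w : seq S, foldl d (Some false) w = Some false by elim.
rewrite /a1; case: w => [|a [|b w]] //=; by rewrite H.
Qed.

Definition R1 : langset unit := ratset (fun w : seq unit => 0 < size w) (fun _ => @a1 unit).

Lemma part1 : alphabet unit /\ rational_set R1 /\ ~ rational_set (star_set R1).
Proof.
split; first by rewrite /alphabet card_unit.
split.
  exists unit, (fun w : seq unit => 0 < size w), (fun _ => @a1 unit).
  split; first by rewrite /alphabet card_unit.
  split; first exact: regular_nonempty.
  split; first by move=> [].
  split; first by move=> _; exact: regular_a1.
  by [].
case=> [D [K [phi [_ [_ [HK [_ HR]]]]]]].
have [B HB] := bound_ex phi (enum D).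
have Hin : star_set R1 (star (subst (fun _ => @a1 unit) (nseq B.+1 tt))).
  exists (subst (fun _ => @a1 unit) (nseq B.+1 tt)); split=> //.
  by exists (nseq B.+1 tt); split=> //; rewrite size_nseq.
case/HR: Hin => w [Kw Heq].
have eps : subst phi w [::] by rewrite -Heq; apply: star_nil.
have big : subst phi w (nseq B.+1 tt).
  rewrite -Heq. exists [:: nseq B.+1 tt]; split; first by rewrite /= cats0.
  move=> u; rewrite inE => /eqP ->. by apply/subst_a1; rewrite !size_nseq.
have [d dw [u [pu nu]]] : exists2 d, d \in w & exists u, phi d u /\ u <> [::].
  apply: NNPP => H.
  have : nseq B.+1 tt = [::].
    apply: (subst_small _ big) => d dw u pu; apply: NNPP => nu; apply: H.
    by exists d => //; exists u.
  by [].
have [u' [pu' [nu' su']]] := HB d (mem_enum _ d) (ex_intro _ u (conj pu nu)).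
have := subst_nil_mem eps dw pu'.
rewrite -Heq => /star_size H; have := H nu'; rewrite size_nseq => h.
by have := leq_trans h su'; rewrite ltnn.
Qed.

Lemma regular_family (S Q : finType) (g : Q -> lang S) (dl : Q -> S -> Q) q0 (L : lang S) :
  (forall q a w, g (dl q a) w <-> g q (a :: w)) -> (forall w, L w <-> g q0 w) -> regular L.
Proof.
move=> Hd HL.
pose F : pred Q := fun q => if excluded_middle_informative (g q [::]) then true else false.
exists Q, q0, dl, F => w. rewrite HL.
elim: w q0 {HL} => [|a w IH] q /=.
- by rewrite /F; case: excluded_middle_informative.
- by rewrite -Hd; apply: IH.
Qed.

Lemma regular_ext (S : finType) (L L' : lang S) : regular L -> (forall w, L w <-> L' w) -> regular L'.
Proof. case=> Q [q0 [d [F H]]] E; exists Q, q0, d, F => w; by rewrite -E. Qed.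

Lemma conc_cons (S : finType) (A B : lang S) a w :
  conc A B (a :: w) <-> (A [::] /\ B (a :: w)) \/ conc (fun u => A (a :: u)) B w.
Proof.
split.
- case=> [[|b u] [v [H [Hu Hv]]]]; first by left; rewrite H.
  case: H => -> ->. by right; exists u, v.
- case=> [[Ha Hb]|[u [v [-> [Hu Hv]]]]]; first by exists [::], (a :: w).
  by exists (a :: u), v.
Qed.

Lemma conc_ext (S : finType) (A A' B : lang S) w :
  (forall u, A u <-> A' u) -> conc A B w <-> conc A' B w.
Proof.
move=> E; split; case=> u [v [-> [Hu Hv]]]; exists u, v; split=> //; split=> //; by apply/E.
Qed.

Lemma conc_sub (S : finType) (A A' B : lang S) w :
  (forall u, A u -> A' u) -> conc A B w -> conc A' B w.
Proof.
move=> E; case=> u [v [-> [Hu Hv]]]; exists u, v; split=> //; split=> //; by apply/E.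
Qed.

Lemma regular_conc (S : finType) (A B : lang S) : regular A -> regular B -> regular (conc A B).
Proof.
case=> [QA [qA [dA [FA HA]]]] [QB [qB [dB [FB HB]]]].
pose gA q (w : seq S) : Prop := FA (foldl dA q w).
pose gB q (w : seq S) : Prop := FB (foldl dB q w).
pose g (st : QA * {set QB}) w := conc (gA st.1) B w \/ exists2 s, s \in st.2 & gB s w.
pose dl (st : QA * {set QB}) a := (dA st.1 a, [set dB s a | s in st.2] :|:
       (if FA st.1 then [set dB qB a] else set0)).
apply: (@regular_family _ _ g dl (qA, set0)).
- move=> [p St] a w; rewrite /g /dl /=; split.
  + case=> [Hc|[s]].
      by left; apply/conc_cons; right.
    rewrite inE => /orP [/imsetP [s' s'S ->] Hs|].
      by right; exists s'.
    case: ifP => Fp; last by rewrite inE.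
    rewrite inE => /eqP -> Hs; left; apply/conc_cons; left; split=> //.
    by apply/HB.
  + case=> [/conc_cons [[Hp Hb]|Hc]|[s sS Hs]].
    * right; exists (dB qB a); last exact: (proj1 (HB _) Hb).
      by rewrite inE; apply/orP; right; rewrite /gA /= in Hp; rewrite Hp inE.
    * by left.
    * right; exists (dB s a) => //. by rewrite inE; apply/orP; left; apply/imsetP; exists s.
- move=> w; rewrite /g /=; split.
  + by move=> H; left; apply: (conc_sub _ H) => u /HA.
  + case=> [H|[s]]; last by rewrite inE.
    by apply: (conc_sub _ H) => u /HA.
Qed.

Lemma star_cons (S : finType) (L : lang S) a w :
  star L (a :: w) <-> conc (fun u => L (a :: u)) (star L) w.
Proof.
split.
- case=> ws [Hw Hws]. elim: ws Hw Hws => [|[|b u] ws IH] //= Hw Hws.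
  + apply: IH => // x xws; apply: Hws; by rewrite in_cons xws orbT.
  + case: Hw => -> ->. exists u, (flatten ws); split=> //; split.
      by apply: Hws; rewrite mem_head.
    exists ws; split=> // x xws; apply: Hws; by rewrite in_cons xws orbT.
- case=> u [v [-> [Hu [ws [-> Hws]]]]].
  exists ((a :: u) :: ws); split=> // x; rewrite in_cons => /predU1P [->|]; by auto.
Qed.

Lemma star_conc (S : finType) (L : lang S) w :
  star L w <-> w = [::] \/ conc L (star L) w.
Proof.
split.
- case=> [[|u ws] [-> Hws]]; first by left.
  right; exists u, (flatten ws); split=> //; split; first by apply: Hws; rewrite mem_head.
  exists ws; split=> // x xws; apply: Hws; by rewrite in_cons xws orbT.
- case=> [->|[u [v [-> [Hu [ws [-> Hws]]]]]]]; first exact: star_nil.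
  exists (u :: ws); split=> // x; rewrite in_cons => /predU1P [->|]; by auto.
Qed.

Lemma regular_star (S : finType) (L : lang S) : regular L -> regular (star L).
Proof.
case=> [Q [q0 [d [F HL]]]].
pose gL q (w : seq S) : Prop := F (foldl d q w).
pose g (st : bool * {set Q}) w := (st.1 /\ w = [::]) \/ exists2 s, s \in st.2 & conc (gL s) (star L) w.
pose dl (st : bool * {set Q}) a := (false, [set d s a | s in st.2] :|:
       (if [exists s in st.2, F s] then [set d q0 a] else set0)).
have Hsc : forall a w, star L (a :: w) <-> conc (gL (d q0 a)) (star L) w.
  move=> a w; rewrite star_cons; apply: conc_ext => u; exact: HL.
apply: (@regular_family _ _ g dl (true, [set q0])).
- move=> [b St] a w; rewrite /g /dl /=; split.
  + case=> [[]//|[s]].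
    rewrite inE => /orP [/imsetP [s' s'S ->] Hs|].
      right; exists s' => //; apply/conc_cons; by right.
    case: ifP => [/existsP [s' /andP [s'S Fs']]|_]; last by rewrite inE.
    rewrite inE => /eqP -> Hs; right; exists s' => //; apply/conc_cons; left; split=> //.
    by apply/Hsc.
  + case=> [[_ //]|[s sS /conc_cons [[Fs Hst]|Hc]]].
    * right; exists (d q0 a); last by apply/Hsc.
      rewrite inE; apply/orP; right.
      have -> : [exists s0 in St, F s0] by apply/existsP; exists s; rewrite sS.
      by rewrite inE.
    * right; exists (d s a) => //. by rewrite inE; apply/orP; left; apply/imsetP; exists s.
- move=> w; rewrite /g /= star_conc; split.
  + case=> [->|H]; first by left.
    right; exists q0; first by rewrite inE.
    by apply: (conc_sub _ H) => u /HL.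
  + case=> [[_ ->]|[s]]; first by left.
    rewrite inE => /eqP -> H; right.
    by apply: (conc_sub _ H) => u /HL.
Qed.

Lemma regular_eps (S : finType) : regular (@eps_lang S).
Proof.
exists bool, true, (fun _ _ => false), (fun b => b) => w.
have H : forall w : seq S, foldl (fun _ _ => false) false w = false by elim.
by rewrite /eps_lang; case: w => [|a w] //=; rewrite H.
Qed.

Lemma regular_subst_word (D S : finType) (phi : D -> lang S) w :
  regular_subst phi -> regular (subst phi w).
Proof.
move=> H; elim: w => [|d w IH] /=; first exact: regular_eps.
exact: regular_conc.
Qed.

Lemma conc_eps (S : finType) (A : lang S) : conc A (@eps_lang S) = A.
Proof.
apply: functional_extensionality => w; apply: propositional_extensionality; split.
- by case=> u [v [-> [Hu ->]]]; rewrite cats0.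
- by move=> H; exists w, [::]; rewrite cats0.
Qed.

Lemma part2 (Sigma : finType) (R : langset Sigma) :
  alphabet Sigma -> rational_set R -> finite_langset R ->
  rational_set (star_set R) /\ finite_langset (star_set R).
Proof.
move=> _ [D [K [phi [_ [_ [_ [Hphi HR]]]]]]] [n [f Hf]].
have regf : forall i, regular (f i).
  move=> i; have : R (f i) by apply/Hf; exists i.
  by case/HR => w [_ ->]; apply: regular_subst_word.
split; last first.
  exists n, (fun i => star (f i)) => L; split.
  - by case=> L0 [/Hf [i ->] ->]; exists i.
  - by case=> i ->; exists (f i); split=> //; apply/Hf; exists i.
pose phi' (o : option 'I_n) : lang Sigma := if o is Some i then star (f i) else @eps_lang Sigma.
pose K' (w : seq (option 'I_n)) : Prop := exists i, w = [:: Some i].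
exists (option 'I_n), K', phi'.
split; first by rewrite /alphabet card_option.
split.
  pose d (q : option bool) (a : option 'I_n) : option bool :=
    if q is None then (if a is Some _ then Some true else Some false) else Some false.
  exists (option bool), None, d, (fun q => q == Some true) => w.
  have H : forall w, foldl d (Some false) w = Some false by elim.
  rewrite /K'; case: w => [|[i|] [|b w]] /=; rewrite ?H; split=> //.
  all: try first [by exists i | by case=> ? | by case=> ? [] ].
split; first by move=> w [i ->].
split; first by case=> [i|]; [apply: regular_star | apply: regular_eps].
move=> L; split.
- case=> L0 [/Hf [i ->] ->]. exists [:: Some i]; split; first by exists i.
  by rewrite /= conc_eps.
- case=> w [[i ->] ->]. rewrite /= conc_eps. exists (f i); split=> //. by apply/Hf; exists i.
Qed.

Lemma part3 : exists (Sigma Delta : finType) (phi : Delta -> lang Sigma) (K : lang Delta),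
     alphabet Sigma /\ alphabet Delta /\ regular_subst phi /\
     regular K /\ nonempty_words K /\ finite_langset (@ratset Delta Sigma K phi) /\
     ~ (exists K' : lang Delta,
          regular K' /\ nonempty_words K' /\
          forall L, star_set (@ratset Delta Sigma K phi) L <-> @ratset Delta Sigma K' phi L).
Proof.
exists unit, unit, (fun _ => @a1 unit), (@a1 unit).
split; first by rewrite /alphabet card_unit.
split; first by rewrite /alphabet card_unit.
split; first by move=> _; exact: regular_a1.
split; first exact: regular_a1.
split; first by move=> w; rewrite /a1 => H E; rewrite E in H.
split.
  exists 1, (fun _ => subst (fun _ => @a1 unit) [:: tt]) => L; split.
  - case=> [[|[] [|? ?]] [//= _ ->]]; by exists ord0.
  - by case=> _ ->; exists [:: tt].
case=> K' [_ [_ HK]].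
have : star_set (ratset (@a1 unit) (fun _ => @a1 unit)) (star (subst (fun _ => @a1 unit) [:: tt])).
  exists (subst (fun _ => @a1 unit) [:: tt]); split=> //; by exists [:: tt].
case/HK => w [_ Heq].
have h0 : subst (fun _ => @a1 unit) w [::] by rewrite -Heq; exact: star_nil.
have h1 : subst (fun _ => @a1 unit) w [:: tt].
  rewrite -Heq; exists [:: [:: tt]]; split=> // u; rewrite inE => /eqP ->.
  by apply/subst_a1.
move/subst_a1: h0 => h0; move/subst_a1: h1 => h1.
by rewrite -h0 in h1.
Qed.

Theorem proposition2 :
  (* (1) *)
  (exists (Sigma : finType) (R : langset Sigma),
     alphabet Sigma /\ rational_set R /\ ~ rational_set (star_set R)) /\
  (* (2) *)
  (forall (Sigma : finType) (R : langset Sigma),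
     alphabet Sigma -> rational_set R -> finite_langset R ->
     rational_set (star_set R) /\ finite_langset (star_set R)) /\
  (* (3) *)
  (exists (Sigma Delta : finType) (phi : Delta -> lang Sigma) (K : lang Delta),
     alphabet Sigma /\ alphabet Delta /\ regular_subst phi /\
     regular K /\ nonempty_words K /\ finite_langset (@ratset Delta Sigma K phi) /\
     ~ (exists K' : lang Delta,
          regular K' /\ nonempty_words K' /\
          forall L, star_set (@ratset Delta Sigma K phi) L <-> @ratset Delta Sigma K' phi L)).
Proof.
split; first by exists unit, R1; exact: part1.
split; [exact: part2 | exact: part3].
Qed.
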